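(* Let $(L,\mathbf N)$ be an architecture with $L\ge2$, input dimension $d_{\mathrm{in}}=N_0$, output dimension $d_{\mathrm{out}}=N_L$, width $W=\max_\ell N_\ell$, let $D>0$, and consider $\|f\|_\infty=\operatorname{ess\,sup}_{x\in[-D,D]^{d_{\mathrm{in}}}}\|f(x)\|_\infty$ (Lebesgue measure). Let $\varepsilon\in(0,1/2)$ and $\theta\in\Theta_{L,\mathbf N}$, and let $k\ge0$ be the smallest integer such that $\|\theta\|_\infty\le\varepsilon^{-k}$ and $\max(W,L)\le\varepsilon^{-k}$. Let $m$ be an integer with $m\ge 2kL+k+1+\log_2(\lceil D\rceil)$ and $\eta:=2^{-m\lceil\log_2(\varepsilon^{-1})\rceil}$ (so $\eta\le\varepsilon^m$). Let $Q_\eta(\theta)$ be obtained by replacing each coordinate of $\theta$ by a closest point of $\eta\mathbb Z\cap[-\varepsilon^{-k},\varepsilon^{-k}]$. Then $Q_\eta(\theta)\in\Theta^{\max}_{L,\mathbf N}(\varepsilon^{-k})\cap(\eta\mathbb Z)^{d_{L,\mathbf N}}$ and $\|R_\theta-R_{Q_\eta(\theta)}\|_\infty\le\varepsilon$.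
   Context: ReLU $\rho(x)=\max(0,x)$ coordinatewise. Architecture $(L,\mathbf N)$, $\mathbf N=(N_0,\dots,N_L)$; parameters $\theta=(W_1,\dots,W_L,b_1,\dots,b_L)$, $W_\ell\in\mathbb R^{N_\ell\times N_{\ell-1}}$, $b_\ell\in\mathbb R^{N_\ell}$, forming $\Theta_{L,\mathbf N}\cong\mathbb R^{d_{L,\mathbf N}}$, $d_{L,\mathbf N}=\sum_\ell N_\ell(N_{\ell-1}+1)$; $\|\theta\|_\infty$ = max absolute value of coordinates. Realization: $R_\theta(x)=W_Ly_{L-1}(x)+b_L$, $y_0=x$, $y_\ell=\rho(W_\ell y_{\ell-1}+b_\ell)$, $1\le\ell\le L-1$. $\Theta^{\max}_{L,\mathbf N}(r)$ is the set of $\theta$ all of whose entries (of all $W_\ell,b_\ell$) have absolute value at most $r$. *)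

(* Defs.v *)
From HB Require Import structures.
From mathcomp Require Import all_boot all_order all_algebra.
From mathcomp Require Import reals exp.
Set Implicit Arguments. Unset Strict Implicit. Unset Printing Implicit Defensive.
Import Order.TTheory GRing.Theory Num.Theory.
Local Open Scope ring_scope.

Section ReLUNets.
Variable R : realType.

(* Architecture (L, N) with N_0, ..., N_L given by N (values of N beyond L unused).
   Layer index l : 'I_L stands for the paper's layer l+1:
   weight l = W_(l+1) in R^(N_(l+1) x N_l), bias l = b_(l+1) in R^(N_(l+1)). *)
Record params (L : nat) (N : nat -> nat) := Params {
  weight : forall l : 'I_L, 'M[R]_(N l.+1, N l);
  bias : forall l : 'I_L, 'cV[R]_(N l.+1) }.

Variables (L : nat) (N : nat -> nat).

Definition relu (t : R) : R := Num.max t 0.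

Definition weightn (th : params L N) (l : nat) : 'M[R]_(N l.+1, N l) :=
  (if (l < L)%N as b return (l < L)%N = b -> 'M[R]_(N l.+1, N l)
   then fun h => weight th (Ordinal h) else fun _ => 0) (erefl (l < L)%N).

Definition biasn (th : params L N) (l : nat) : 'cV[R]_(N l.+1) :=
  (if (l < L)%N as b return (l < L)%N = b -> 'cV[R]_(N l.+1)
   then fun h => bias th (Ordinal h) else fun _ => 0) (erefl (l < L)%N).

Fixpoint hidden (th : params L N) (x : 'cV[R]_(N 0%N)) (l : nat) : 'cV[R]_(N l) :=
  match l with
  | 0 => x
  | l'.+1 => map_mx relu (weightn th l' *m hidden th x l' + biasn th l')
  end.

(* R_theta(x) = W_L y_(L-1) + b_L  (output dimension N_((L-1)+1) = N_L for L >= 1) *)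
Definition realization (th : params L N) (x : 'cV[R]_(N 0%N)) : 'cV[R]_(N L.-1.+1) :=
  weightn th L.-1 *m hidden th x L.-1 + biasn th L.-1.

Definition param_norm (th : params L N) : R :=
  Num.max
    (\big[Num.max/0]_(l < L) \big[Num.max/0]_(i < N l.+1)
        \big[Num.max/0]_(j < N l) `|weight th l i j|)
    (\big[Num.max/0]_(l < L) \big[Num.max/0]_(i < N l.+1) `|bias th l i 0|).

Definition all_coords (P : R -> Prop) (th : params L N) : Prop :=
  (forall (l : 'I_L) i j, P (weight th l i j)) /\
  (forall (l : 'I_L) i, P (bias th l i 0)).

Definition in_Theta_max (r : R) (th : params L N) : Prop :=
  all_coords (fun t => `|t| <= r) th.

Definition on_grid (eta : R) (th : params L N) : Prop :=
  all_coords (fun t => exists z : int, t = z%:~R * eta) th.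

Definition is_closest (G : R -> Prop) (v q : R) : Prop :=
  G q /\ forall g, G g -> `|v - q| <= `|v - g|.

Definition is_quantization (G : R -> Prop) (th thq : params L N) : Prop :=
  (forall (l : 'I_L) i j, is_closest G (weight th l i j) (weight thq l i j)) /\
  (forall (l : 'I_L) i, is_closest G (bias th l i 0) (bias thq l i 0)).

Definition width : nat := \max_(l < L.+1) N l.

End ReLUNets.

Definition log2 {R : realType} (x : R) : R := ln x / ln 2.

(* Main.v *)
Require Import Defs.
From HB Require Import structures.
From mathcomp Require Import all_boot all_order all_algebra.
From mathcomp Require Import reals exp.
From mathcomp Require Import ring lra zify.
Import Order.TTheory GRing.Theory Num.Theory.
Local Open Scope ring_scope.

Lemma b0_lem (R : realType) (C P : R) : 1 <= C -> 1 <= P -> 0 <= (C + 1) * P - 1.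
Proof. move=> *; nra. Qed.

Lemma final_arith (R : realType) (r eta C P a Lr eps : R) :
  2 <= r -> 1 <= C -> 0 <= eta -> 1 <= P -> Lr = a + 1 -> Lr <= r -> 0 <= a ->
  eta * (P * r * r * r) * C <= eps ->
  r * (eta * ((C + 1) * P - 1)) + r * (a * (C + 1) * P * eta) + eta <= eps.
Proof.
move=> r2 C1 e0 P1 eL hLr a0 h.
have X0 : 0 <= P * eta by apply: mulr_ge0; lra.
have step1 : r * (eta * ((C + 1) * P - 1)) + r * (a * (C + 1) * P * eta) + eta
    <= Lr * (C + 1) * (P * eta) * r.
  have h2 : 0 <= eta * (r - 1) by apply: mulr_ge0; lra.
  rewrite eL; lra.
apply: le_trans step1 _.
have s2 : Lr * (C + 1) * (P * eta) * r <= r * (C + 1) * (P * eta) * r.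
  apply: ler_wpM2r; first lra.
  apply: ler_wpM2r => //; apply: ler_wpM2r => //; lra.
apply: le_trans s2 _.
have s3 : r * (C + 1) * (P * eta) * r <= r * (r * C) * (P * eta) * r.
  apply: ler_wpM2r; first lra.
  apply: ler_wpM2r => //; apply: ler_wpM2l; nra.
apply: le_trans s3 _.
have -> : r * (r * C) * (P * eta) * r = eta * (P * r * r * r) * C by ring.
exact: h.
Qed.


Lemma wn_rel (R : realType) L N (th thq : params R L N) (P : R -> R -> Prop) :
  P 0 0 -> (forall l i j, P (weight th l i j) (weight thq l i j)) ->
  forall l i j, P (weightn th l i j) (weightn thq l i j).
Proof.
move=> P0 H l i j; rewrite /weightn.
move: (erefl (l < L)%N); case: {2 3 7}(l < L)%N => h.
- exact: H.
- by rewrite !mxE.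
Qed.

Lemma bn_rel (R : realType) L N (th thq : params R L N) (P : R -> R -> Prop) :
  P 0 0 -> (forall l i, P (bias th l i 0) (bias thq l i 0)) ->
  forall l i, P (biasn th l i 0) (biasn thq l i 0).
Proof.
move=> P0 H l i; rewrite /biasn.
move: (erefl (l < L)%N); case: {2 3 7}(l < L)%N => h.
- exact: H.
- by rewrite !mxE.
Qed.

Lemma relu_norm (R : realType) (a : R) : `|relu a| <= `|a|.
Proof. rewrite /relu; case: (lerP a 0) => h; rewrite ?normr0 ?normr_ge0 //. Qed.

Lemma relu_lip (R : realType) (a b : R) : `|relu a - relu b| <= `|a - b|.
Proof.
rewrite /relu; case: (lerP a 0) => h; case: (lerP b 0) => h'; rewrite ?subrr ?normr0 ?normr_ge0 //.
- rewrite sub0r normrN (gtr0_norm h') ler0_norm; lra.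
- rewrite subr0 (gtr0_norm h) ger0_norm; lra.
Qed.

Lemma sum_bound (R : realType) n (F : 'I_n -> R) c :
  (forall j, `|F j| <= c) -> `|\sum_j F j| <= n%:R * c.
Proof.
move=> H; apply: le_trans (ler_norm_sum _ _ _) _.
apply: le_trans (ler_sum _ (fun j _ => H j)) _.
by rewrite sumr_const card_ord mulr_natl.
Qed.

Lemma layer (R : realType) p n (A Aq : 'M[R]_(p,n)) (b bq : 'cV[R]_p)
  (y z : 'cV[R]_n) (r eta B e : R) :
  0 <= B -> 0 <= e -> 0 <= eta -> 0 <= r -> n%:R <= r ->
  (forall i j, `|A i j| <= r) -> (forall i j, `|Aq i j| <= r) ->
  (forall i j, `|A i j - Aq i j| <= eta) ->
  (forall i, `|b i 0| <= r) -> (forall i, `|bq i 0| <= r) ->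
  (forall i, `|b i 0 - bq i 0| <= eta) ->
  (forall j, `|y j 0| <= B) -> (forall j, `|z j 0| <= B) ->
  (forall j, `|y j 0 - z j 0| <= e) ->
  forall i, `|(A *m y + b) i 0| <= r * r * B + r /\
            `|(Aq *m z + bq) i 0| <= r * r * B + r /\
            `|(A *m y + b) i 0 - (Aq *m z + bq) i 0| <= r * (eta * B + r * e) + eta.
Proof.
move=> B0 e0 eta0 r0 nr hA hAq hAd hb hbq hbd hy hz hyz i.
have gen : forall (M : 'M[R]_(p,n)) (c : 'cV[R]_p) (w : 'cV[R]_n),
    (forall i j, `|M i j| <= r) -> (forall i, `|c i 0| <= r) ->
    (forall j, `|w j 0| <= B) -> `|(M *m w + c) i 0| <= r * r * B + r.
  move=> M c w hM hc hw; rewrite !mxE.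
  apply: le_trans (ler_normD _ _) _; apply: lerD; last exact: hc.
  have h1 : `|\sum_j M i j * w j 0| <= n%:R * (r * B).
    apply: sum_bound => j; rewrite normrM; apply: ler_pM => //.
  apply: le_trans h1 _; rewrite -mulrA; apply: ler_wpM2r => //.
  exact: mulr_ge0.
split; first exact: gen.
split; first exact: gen.
rewrite !mxE.
have -> : \sum_j A i j * y j 0 + b i 0 - (\sum_j Aq i j * z j 0 + bq i 0)
   = \sum_j ((A i j - Aq i j) * y j 0 + Aq i j * (y j 0 - z j 0)) + (b i 0 - bq i 0).
  rewrite opprD addrACA -sumrB; congr (_ + _); apply: eq_bigr => j _; ring.
apply: le_trans (ler_normD _ _) _; apply: lerD; last exact: hbd.
have h1 : `|\sum_j ((A i j - Aq i j) * y j 0 + Aq i j * (y j 0 - z j 0))| <= n%:R * (eta * B + r * e).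
  apply: sum_bound => j; apply: le_trans (ler_normD _ _) _; rewrite !normrM.
  by apply: lerD; apply: ler_pM.
apply: le_trans h1 _; apply: ler_wpM2r => //.
by apply: addr_ge0; apply: mulr_ge0.
Qed.

Lemma hidden_bound (R : realType) L N (th thq : params R L N) (x : 'cV[R]_(N 0%N))
  (r eta C : R) :
  1 <= C -> 2 <= r -> 0 <= eta ->
  (forall l, (l < L)%N -> (N l)%:R <= r) ->
  (forall l i j, `|weightn th l i j| <= r) ->
  (forall l i j, `|weightn thq l i j| <= r) ->
  (forall l i j, `|weightn th l i j - weightn thq l i j| <= eta) ->
  (forall l i, `|biasn th l i 0| <= r) ->
  (forall l i, `|biasn thq l i 0| <= r) ->
  (forall l i, `|biasn th l i 0 - biasn thq l i 0| <= eta) ->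
  (forall i, `|x i 0| <= C) ->
  forall l, (l < L)%N -> forall i,
   `|hidden th x l i 0| <= (C + 1) * r ^+ (2 * l) - 1 /\
   `|hidden thq x l i 0| <= (C + 1) * r ^+ (2 * l) - 1 /\
   `|hidden th x l i 0 - hidden thq x l i 0| <= l%:R * (C + 1) * r ^+ (2 * l) * eta / r.
Proof.
move=> C1 r2 eta0 hN hW hWq hWd hb hbq hbd hx.
elim=> [|l IH] hl i.
  rewrite /= expr0 mulr1 mul0r !mul0r subrr normr0.
  split; first by have := hx i; lra.
  split; first by have := hx i; lra.
  by [].
have hl' : (l < L)%N by apply: ltnW.
have r0 : 0 < r by lra.
have P1 : 1 <= r ^+ (2 * l) by apply: exprn_ege1; lra.
set P := r ^+ (2 * l) in IH P1 *.
have B0 : 0 <= (C + 1) * P - 1 by apply: b0_lem.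
have e0 : 0 <= l%:R * (C + 1) * P * eta / r.
  apply: divr_ge0; last lra.
  apply: mulr_ge0 => //; apply: mulr_ge0; last lra.
  apply: mulr_ge0; [exact: ler0n | lra].
have := @layer R _ _ _ _ _ _ _ _ _ _ _ _ B0 e0 eta0 (ltW r0) (hN l hl') (hW l) (hWq l) (hWd l) (hb l) (hbq l) (hbd l)
  (fun j => (IH hl' j).1) (fun j => (IH hl' j).2.1) (fun j => (IH hl' j).2.2) i.
move=> [h1 [h2 h3]]; rewrite !mxE in h1 h2 h3.
have eP : r ^+ (2 * l.+1) = P * r * r by rewrite mulnS addnC exprD expr2 mulrA.
rewrite /= !mxE eP.
have ee : r * (l%:R * (C + 1) * P * eta / r) = l%:R * (C + 1) * P * eta.
  by field; lra.
have eR : (l.+1)%:R * (C + 1) * (P * r * r) * eta / r = (l%:R + 1) * (C + 1) * P * r * eta.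
  by rewrite -addn1 natrD; field; lra.
rewrite eR; rewrite mulrDr ee in h3.
split; first by apply: le_trans (relu_norm _ _) _; nra.
split; first by apply: le_trans (relu_norm _ _) _; nra.
apply: le_trans (relu_lip _ _ _) _; nra.
Qed.

Lemma pow2_ge (R : realType) (y : R) (n : nat) : 0 < y -> log2 y <= n%:R -> y <= 2 ^+ n.
Proof.
move=> y0 h.
have l2 : 0 < ln (2 : R) by apply: ln_gt0; lra.
have p2 : (0 : R) < 2 ^+ n by apply: exprn_gt0; lra.
rewrite -ler_ln ?posrE // lnXn; last lra.
move: h; rewrite /log2 ler_pdivrMr // => h.
by rewrite mulr_natl in h.
Qed.

Lemma eta_bound (R : realType) (eps C : R) (k m L : nat) :
  0 < eps -> eps < 1 / 2 -> 1 <= C ->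
  ((2 * k * L + k + 1)%N%:R + log2 C <= (m%:R : R)) ->
  0 < (2 : R) ^ (- (m%:Z * Num.ceil (log2 (eps^-1)))) /\
  (2 : R) ^ (- (m%:Z * Num.ceil (log2 (eps^-1)))) * (eps ^- k) ^+ (2 * L + 1) * C <= eps.
Proof.
move=> e0 e2 C1 hm.
have l2 : 0 < ln (2 : R) by apply: ln_gt0; lra.
have ei : 1 < eps^-1 by rewrite invf_gt1 //; lra.
have lg : 0 < log2 (eps^-1) by rewrite /log2; apply: divr_gt0 => //; apply: ln_gt0.
have := ceil_ge (log2 (eps^-1)).
have : 0 <= Num.ceil (log2 (eps^-1)) by rewrite ceil_ge0; lra.
case: (Num.ceil _) => [n|n] // _ hn.
have hn' : log2 (eps^-1) <= n%:R by exact: hn.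
have p2n := @pow2_ge R _ _ (lt_trans ltr01 ei) hn'.
rewrite -PoszM -exprnN.
have p2 : forall j, (0 : R) < 2 ^+ j by move=> j; apply: exprn_gt0; lra.
split; first by rewrite invr_gt0.
have lC : 0 <= log2 C by rewrite /log2; apply: divr_ge0; [apply: ln_ge0|lra].
have hk : (2 * k * L + k + 1 <= m)%N by rewrite -(ler_nat R); lra.
set j := (m - (2 * k * L + k + 1))%N.
have mj : m = (k * (2 * L + 1) + 1 + j)%N by rewrite /j; lia.
have ejm : ((2 * k * L + k + 1)%N%:R + j%:R : R) = m%:R.
  by rewrite -natrD /j; congr (_%:R); lia.
have hj : log2 C <= j%:R by lra.
have Cj := @pow2_ge R _ _ (lt_le_trans ltr01 C1) hj.
have eta_le : (2 ^+ (m * n))^-1 <= eps ^+ m.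
  rewrite -[eps ^+ m]invrK lef_pV2 ?posrE ?invr_gt0 ?exprn_gt0 //.
  rewrite -exprVn mulnC exprM.
  apply: lerXn2r => //; rewrite nnegrE; lra.
set E := eps ^+ (k * (2 * L + 1)).
have E0 : 0 < E by apply: exprn_gt0.
have eQ : (eps ^- k) ^+ (2 * L + 1) = E^-1 by rewrite /E exprVn -exprM.
have em : eps ^+ m = E * eps * eps ^+ j.
  by rewrite /E mj !exprD expr1.
have ej : eps ^+ j <= (2 ^+ j)^-1.
  rewrite -exprVn; apply: lerXn2r; rewrite ?nnegrE; lra.
rewrite eQ.
have Q0 : 0 < E^-1 by rewrite invr_gt0.
apply: le_trans (_ : eps ^+ m * E^-1 * C <= _).
  apply: ler_wpM2r; first lra.
  by apply: ler_wpM2r; first exact: ltW.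
rewrite em.
have -> : E * eps * eps ^+ j * E^-1 * C = eps * (eps ^+ j * C) by field; lra.
have ejC : eps ^+ j * C <= 1.
  apply: le_trans (_ : (2 ^+ j)^-1 * C <= 1).
    by apply: ler_wpM2r; first lra.
  by rewrite ler_pdivrMl // mulr1.
nra.
Qed.

Lemma grid_below (R : realType) (eta w : R) : 0 < eta -> 0 <= w ->
  exists z : int, 0 <= z%:~R * eta <= w /\ w - z%:~R * eta <= eta.
Proof.
move=> e0 w0; exists (Num.floor (w / eta)).
have := floor_itv (w / eta).
have f0 : (0 : R) <= (Num.floor (w / eta))%:~R.
  by rewrite ler0z floor_ge0; apply: divr_ge0 => //; lra.
rewrite intrD /= => /andP [h1 h2].
have h1' : (Num.floor (w / eta))%:~R * eta <= w by rewrite -ler_pdivlMr.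
have h2' : w < ((Num.floor (w / eta))%:~R + 1) * eta by rewrite -ltr_pdivrMr.
split; last nra.
apply/andP; split => //; apply: mulr_ge0 => //; lra.
Qed.

Lemma quant_err (R : realType) (eta r v q : R) : 0 < eta -> `|v| <= r ->
  is_closest (fun q => (exists z : int, q = z%:~R * eta) /\ `|q| <= r) v q ->
  `|v - q| <= eta.
Proof.
move=> e0 vr [_ hq].
have [v0|v0] := lerP 0 v.
  have [z [/andP [g0 g1] g2]] := @grid_below R _ _ e0 v0.
  apply: le_trans (hq (z%:~R * eta) _) _.
    split; first by exists z.
    rewrite ger0_norm //; apply: le_trans vr; apply: le_trans g1 _; exact: ler_norm.
  rewrite ger0_norm //; lra.
have v0' : 0 <= - v by lra.
have [z [/andP [g0 g1] g2]] := @grid_below R _ _ e0 v0'.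
apply: le_trans (hq ((- z)%:~R * eta) _) _.
  split; first by exists (- z).
  rewrite intrN mulNr normrN ger0_norm //; apply: le_trans vr.
  rewrite ltr0_norm //; lra.
rewrite intrN mulNr ler0_norm; lra.
Qed.

Theorem mainTheorem7 (R : realType) (L : nat) (N : nat -> nat) (D eps : R)
  (th : params R L N) (k m : nat) (thq : params R L N) :
  (2 <= L)%N -> 0 < D -> 0 < eps -> eps < 1 / 2 ->
  (* k is the smallest natural number with the two bounds *)
  (param_norm th <= eps ^- k /\ ((maxn (width L N) L)%:R : R) <= eps ^- k) ->
  (forall k' : nat, param_norm th <= eps ^- k' /\
     ((maxn (width L N) L)%:R : R) <= eps ^- k' -> (k <= k')%N) ->
  ((2 * k * L + k + 1)%N%:R + log2 ((Num.ceil D)%:~R : R) <= (m%:R : R)) ->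
  let eta : R := 2 ^ (- (m%:Z * Num.ceil (log2 (eps^-1)))) in
  let G : R -> Prop := fun q => (exists z : int, q = z%:~R * eta) /\ `|q| <= eps ^- k in
  is_quantization G th thq ->
  in_Theta_max (eps ^- k) thq /\ on_grid eta thq /\
  (forall x : 'cV[R]_(N 0%N), (forall i, `|x i 0| <= D) ->
     forall i, `|realization th x i 0 - realization thq x i 0| <= eps).
Proof.
move=> L2 D0 e0 e2 [hpn hW] _ hm eta G [hqw hqb].
set r := eps ^- k in hpn hW *.
set C : R := (Num.ceil D)%:~R in hm.
have C1 : 1 <= C.
  rewrite /C ler1z -gtz0_ge1 -(ltr0z R); apply: lt_le_trans D0 _; exact: ceil_ge.
have DC : D <= C by exact: ceil_ge.
have [eta0 etab] := @eta_bound R eps C k m L e0 e2 C1 hm.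
rewrite -/eta -/r in eta0 etab.
have Lr : L%:R <= r by apply: le_trans hW; rewrite ler_nat leq_maxr.
have r2 : 2 <= r by apply: le_trans Lr; rewrite (ler_nat R 2 L).
have hN : forall l, (l < L)%N -> (N l)%:R <= r.
  move=> l hl; apply: le_trans hW; rewrite ler_nat; apply: leq_trans _ (leq_maxl _ _); rewrite /width.
  exact: (@leq_bigmax _ (fun i : 'I_L.+1 => N i) (Ordinal (ltnW hl : (l < L.+1)%N))).
have wpn : forall l i j, `|weight th l i j| <= r.
  move=> l i j; apply: le_trans hpn; rewrite /param_norm le_max; apply/orP; left.
  apply: le_trans (le_bigmax _ _ l); apply: le_trans (le_bigmax _ _ i).
  exact: (le_bigmax _ (fun j => `|weight th l i j|) j).
have bpn : forall l i, `|bias th l i 0| <= r.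
  move=> l i; apply: le_trans hpn; rewrite /param_norm le_max; apply/orP; right.
  apply: le_trans (le_bigmax _ _ l).
  exact: (le_bigmax _ (fun i => `|bias th l i 0|) i).
have r0 : 0 <= r by lra.
have hW1 := @wn_rel R L N th th (fun a _ => `|a| <= r) (ltac:(by rewrite /= normr0))
  (fun l i j => wpn l i j).
have hW2 := @wn_rel R L N thq thq (fun a _ => `|a| <= r) (ltac:(by rewrite /= normr0))
  (fun l i j => (hqw l i j).1.2).
have hW3 := @wn_rel R L N th thq (fun a b => `|a - b| <= eta) (ltac:(by rewrite /= subrr normr0; exact: ltW))
  (fun l i j => @quant_err R _ _ _ _ eta0 (wpn l i j) (hqw l i j)).
have hB1 := @bn_rel R L N th th (fun a _ => `|a| <= r) (ltac:(by rewrite /= normr0))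
  (fun l i => bpn l i).
have hB2 := @bn_rel R L N thq thq (fun a _ => `|a| <= r) (ltac:(by rewrite /= normr0))
  (fun l i => (hqb l i).1.2).
have hB3 := @bn_rel R L N th thq (fun a b => `|a - b| <= eta) (ltac:(by rewrite /= subrr normr0; exact: ltW))
  (fun l i => @quant_err R _ _ _ _ eta0 (bpn l i) (hqb l i)).
split.
  by split; [move=> l i j; exact: (hqw l i j).1.2 | move=> l i; exact: (hqb l i).1.2].
split.
  by split; [move=> l i j; exact: (hqw l i j).1.1 | move=> l i; exact: (hqb l i).1.1].
move=> x hx i.
have hxC : forall i, `|x i 0| <= C by move=> j; apply: le_trans (hx j) DC.
have hl : (L.-1 < L)%N by rewrite prednK // (ltnW L2).
have HB := @hidden_bound R L N th thq x r eta C C1 r2 (ltW eta0) hN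
  (fun l i j => hW1 l i j) (fun l i j => hW2 l i j) (fun l i j => hW3 l i j)
  (fun l i => hB1 l i) (fun l i => hB2 l i) (fun l i => hB3 l i) hxC _ hl.
set l' := L.-1 in HB hl *.
have P1 : 1 <= r ^+ (2 * l') by apply: exprn_ege1; lra.
set P := r ^+ (2 * l') in HB P1.
have B0 : 0 <= (C + 1) * P - 1 by apply: b0_lem.
have e0' : 0 <= l'%:R * (C + 1) * P * eta / r.
  apply: divr_ge0; last lra.
  apply: mulr_ge0; last lra; apply: mulr_ge0; last lra.
  apply: mulr_ge0; [exact: ler0n | lra].
have := @layer R _ _ _ _ _ _ _ _ _ _ _ _ B0 e0' (ltW eta0) r0 (hN l' hl)
  (hW1 l') (hW2 l') (hW3 l') (hB1 l') (hB2 l') (hB3 l')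
  (fun j => (HB j).1) (fun j => (HB j).2.1) (fun j => (HB j).2.2) i.
move=> [_ [_ h3]].
rewrite /realization -/l'.
apply: le_trans h3 _.
have ee : r * (l'%:R * (C + 1) * P * eta / r) = l'%:R * (C + 1) * P * eta.
  by field; lra.
rewrite mulrDr ee.
have eL : L%:R = l'%:R + 1 :> R by rewrite natr1 /l' prednK // (ltnW L2).
have eP : r ^+ (2 * L + 1) = P * r * r * r.
  by rewrite /P -{1}(prednK (ltnW L2)) -/l' mulnS -addnA addnC exprD -addn1 exprD expr2 expr1; ring.
rewrite eP in etab.
apply: (@final_arith R _ _ _ _ _ _ _ r2 C1 (ltW eta0) P1 eL Lr (ler0n _ _) etab).
Qed.
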